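(* Fix $\theta,E$, $0<\varepsilon<1/7$, $0<\hat\rho<1/2$, $\ell\in\mathbb{N}$ and $1<\gamma\le|\log\varepsilon|$; set $M=\max\{\ell,|\log\hat\rho|\}$, let $\hat\ell\in\mathbb{N}$ with $\hat\ell>16|\log\varepsilon|M$, and let $\check\gamma=\gamma-6|\log\varepsilon|M/\hat\ell$. Suppose the finite interval $\hat\Lambda\subset\mathbb{Z}$ is partitioned by $\mathcal{P}$ into consecutive intervals $\Lambda_l\cup\Lambda\cup\Lambda_r$ (left to right) such that: (1) $\Lambda_l$ and $\Lambda_r$ each satisfy the Green's function decay property for $(\ell,\gamma)$; (2) $R^{\hat\Lambda}=(H^{\hat\Lambda}(\theta)-E)^{-1}$ is well defined and, writing $\Lambda=[a,b]$ and $P$ for the coordinate projection onto $[a-\ell,b+\ell]\cap\hat\Lambda$, one has $\|P R^{\hat\Lambda}\Gamma^{\hat\Lambda}_{\mathcal{P}}\|\le 2\hat\rho^{-1}$; (3) $|\Lambda|\le M$. Then $\hat\Lambda$ satisfies the Green's function decay property for $(\hat\ell,\check\gamma)$.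
   Context: $H^{\Lambda}(\theta)$ is the Dirichlet restriction to a finite interval $\Lambda\subset\mathbb{Z}$ of $H=\varepsilon\Delta+V$, $(H\psi)(n)=\varepsilon(\psi(n+1)+\psi(n-1))+V_n\psi(n)$, with $V_n=v(\theta+n\alpha)$ a real bounded potential: a tridiagonal symmetric matrix with diagonal $V_m$, $m\in\Lambda$, and off-diagonal entries $\varepsilon$. For a partition $\mathcal{P}$ of $\Lambda$ into consecutive intervals $\Lambda_j$, $H^\Lambda_{\mathcal P}=\bigoplus_j H^{\Lambda_j}$ and $\Gamma^\Lambda_{\mathcal P}=H^\Lambda-H^\Lambda_{\mathcal P}$ (the $\varepsilon$ hopping terms connecting adjacent blocks); $R^\Lambda=(H^\Lambda-E)^{-1}$, $R^\Lambda(m,n)=\langle\delta_m,R^\Lambda\delta_n\rangle$. An interval $\Lambda$ satisfies the Green's function decay property for $(\ell,\gamma)$ (at the given $\theta,E$) if $E\notin\operatorname{spec}H^\Lambda(\theta)$ and $\log|R^\Lambda(m,n)|\le-\gamma|m-n|$ for all $m,n\in\Lambda$ with $|m-n|\ge\ell$. *)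

(* Defs.v *)
From HB Require Import structures.
From mathcomp Require Import all_boot all_order all_algebra.
From mathcomp Require Import all_classical all_reals.
From mathcomp Require Import topology normedtype sequences exp.
Set Implicit Arguments. Unset Strict Implicit. Unset Printing Implicit Defensive.
Import Order.TTheory GRing.Theory Num.Theory.
Local Open Scope ring_scope.
Local Open Scope classical_set_scope.

Definition qp_pot {R : realType} (v : R -> R) (alpha theta : R) (n : int) : R :=
  v (theta + n%:~R * alpha).

(* Dirichlet restriction H^Lambda of H = eps Delta + V to the interval
   Lambda = [s, s + n - 1] of Z; row/column index i : 'I_n corresponds to
   the site s + i. *)
Definition Hmat {R : realType} (eps : R) (V : int -> R) (s : int) (n : nat)
  : 'M[R]_n :=
  \matrix_(i < n, j < n)
    (if i == j then V (s + (i : nat)%:Z)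
     else if (i.+1 == j) || (j.+1 == i) then eps else 0).

Definition odist {n : nat} (i j : 'I_n) : nat := `|(i : nat)%:Z - (j : nat)%:Z|%N.

(* Green's function decay property for (l, gamma) on Lambda = [s, s+n-1]:
   E is not in spec H^Lambda, and log |R^Lambda(m,n)| <= -gamma |m-n| for
   |m - n| >= l (written without log, with the convention log 0 = -oo). *)
Definition GF_decay {R : realType} (eps : R) (V : int -> R) (s : int) (n : nat)
  (E : R) (l : nat) (gamma : R) : Prop :=
  ~~ eigenvalue (Hmat eps V s n) E /\
  forall i j : 'I_n, (l <= odist i j)%N ->
    `| invmx (Hmat eps V s n - E%:M) i j | <= expR (- (gamma * (odist i j)%:R)).

Definition l2norm {R : realType} {n : nat} (x : 'cV[R]_n) : R :=
  Num.sqrt (\sum_(i < n) x i 0 ^+ 2).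

Definition opnorm {R : realType} {m n : nat} (A : 'M[R]_(m, n)) : R :=
  sup [set r | exists x : 'cV[R]_n, l2norm x <= 1 /\ r = l2norm (A *m x)].

(* Main.v *)
Require Import Defs.
From HB Require Import structures.
From mathcomp Require Import all_boot all_order all_algebra.
From mathcomp Require Import all_classical all_reals.
From mathcomp Require Import topology normedtype sequences exp.
From mathcomp Require Import zify ring lra.
Import Order.TTheory GRing.Theory Num.Theory.
Local Open Scope ring_scope.
Definition ext {R : realType} {n : nat} (X : 'M[R]_n) (i j : nat) : R :=
  match (insub i : option 'I_n), (insub j : option 'I_n) with
  | Some a, Some b => X a b | _, _ => 0 end.

Lemma extE (R : realType) n (X : 'M[R]_n) (a b : 'I_n) : ext X a b = X a b.
Proof. by rewrite /ext !valK. Qed.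

Lemma ext_outl {R : realType} n (X : 'M[R]_n) i j : (n <= i)%N -> ext X i j = 0.
Proof. by move=> h; rewrite /ext insubN // -leqNgt. Qed.

Lemma ext_outr {R : realType} n (X : 'M[R]_n) i j : (n <= j)%N -> ext X i j = 0.
Proof.
move=> h; rewrite /ext; case: (insub i) => // a.
by rewrite insubN // -leqNgt.
Qed.

Lemma ext_ord {R : realType} n (X : 'M[R]_n) i j (hi : (i < n)%N) (hj : (j < n)%N) :
  ext X i j = X (Ordinal hi) (Ordinal hj).
Proof. by rewrite -extE. Qed.

Lemma ext_mul {R : realType} n (X Y : 'M[R]_n) i j : (i < n)%N -> (j < n)%N ->
  ext (X *m Y) i j = \sum_(0 <= k < n) ext X i k * ext Y k j.
Proof.
move=> hi hj; rewrite ext_ord mxE big_mkord; apply: eq_bigr => k _.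
by rewrite -!extE.
Qed.

Lemma ext_add {R : realType} n (X Y : 'M[R]_n) i j :
  ext (X + Y) i j = ext X i j + ext Y i j.
Proof.
case: (ltnP i n) => hi; last by rewrite !ext_outl // addr0.
case: (ltnP j n) => hj; last by rewrite !ext_outr // addr0.
by rewrite !ext_ord mxE.
Qed.

Lemma ext_opp {R : realType} n (X : 'M[R]_n) i j : ext (- X) i j = - ext X i j.
Proof.
case: (ltnP i n) => hi; last by rewrite !ext_outl // oppr0.
case: (ltnP j n) => hj; last by rewrite !ext_outr // oppr0.
by rewrite !ext_ord mxE.
Qed.

Lemma ext_scal {R : realType} n (a : R) i j : (i < n)%N -> (j < n)%N ->
  ext (a%:M : 'M[R]_n) i j = a * (i == j)%:R.
Proof. by move=> hi hj; rewrite ext_ord mxE mulr_natr. Qed.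

Lemma ext_tr {R : realType} n (X : 'M[R]_n) i j : ext X^T i j = ext X j i.
Proof.
case: (ltnP i n) => hi; last by rewrite ext_outl // ext_outr.
case: (ltnP j n) => hj; last by rewrite ext_outr // ext_outl.
by rewrite !ext_ord mxE.
Qed.

Definition hf {R : realType} (eps : R) (V : int -> R) (s : int) (i j : nat) : R :=
  if i == j then V (s + i%:Z) else if (i.+1 == j) || (j.+1 == i) then eps else 0.

Lemma ext_H (R : realType) (eps : R) V s n i j : (i < n)%N -> (j < n)%N ->
  ext (Hmat eps V s n) i j = hf eps V s i j.
Proof. by move=> hi hj; rewrite ext_ord mxE. Qed.

Lemma ext_block {R : realType} a b (X : 'M[R]_a) (Y : 'M[R]_b) i j :
  (i < a + b)%N -> (j < a + b)%N ->
  ext (block_mx X 0 0 Y) i j =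
  if (i < a)%N && (j < a)%N then ext X i j
  else if (a <= i)%N && (a <= j)%N then ext Y (i - a) (j - a) else 0.
Proof.
move=> hi hj; rewrite ext_ord /block_mx mxE.
case: splitP => [i' /= ei | i' /= ei]; rewrite mxE; case: splitP => [j' /= ej | j' /= ej].
all: subst i j; rewrite ?mxE; have := ltn_ord i'; have := ltn_ord j' => hj' hi'.
- by rewrite hi' hj' /= extE.
- case: ifP => [/andP[h1 h2]|_]; first lia. case: ifP => // /andP[h1 h2]; lia.
- case: ifP => [/andP[h1 h2]|_]; first lia. case: ifP => // /andP[h1 h2]; lia.
- by rewrite ltnNge leq_addr /= !leq_addr /= !addKn extE.
Qed.
Lemma sum_delta {R : realType} (x o t : nat) (f : nat -> R) :
  \sum_(0 <= j < t) (x == o + j)%N%:R * f j =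
  if (o <= x)%N && (x < o + t)%N then f (x - o)%N else 0.
Proof.
elim: t => [|t IH]; first by rewrite big_geq // addn0; case: ifP => // /andP[]; lia.
rewrite big_nat_recr //= IH.
case: (eqVneq x (o + t)%N) => [->|hne].
  rewrite mul1r.
  have -> : (o <= o + t)%N && (o + t < o + t)%N = false by lia.
  by rewrite add0r addKn leq_addr /= ltn_add2l ltnSn.
rewrite mul0r addr0.
case: ifP => h1; case: ifP => h2 //; move: h1 h2 hne; lia.
Qed.

Lemma resolv {R : realType} (N o t : nat) (g a lb : nat -> nat -> R) (eps : R) (m n : nat) :
  (forall k j, (k.+1 < j)%N || (j.+1 < k)%N -> a k j = 0) ->
  (forall k, (k.+1 < N)%N -> a k k.+1 = eps) -> (forall k, (k.+1 < N)%N -> a k.+1 k = eps) ->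
  (forall j, (j < N)%N -> \sum_(0 <= k < N) g m k * a k j = (m == j)%:R) ->
  (forall k n, (k < t)%N -> (n < t)%N ->
     \sum_(0 <= j < t) a (o + k)%N (o + j)%N * lb j n = (k == n)%:R) ->
  (0 < t)%N -> (o + t <= N)%N -> (n < t)%N ->
  g m (o + n)%N + (if (0 < o)%N then g m o.-1 * eps * lb 0%N n else 0)
    + (if (o + t < N)%N then g m (o + t)%N * eps * lb t.-1 n else 0)
  = if (o <= m)%N && (m < o + t)%N then lb (m - o)%N n else 0.
Proof.
move=> a0 aup adn GA LA t0 otN nt.
pose F j := \sum_(0 <= k < N) g m k * a k (o + j)%N.
have e1 : \sum_(0 <= j < t) F j * lb j n =
          if (o <= m)%N && (m < o + t)%N then lb (m - o)%N n else 0.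
  rewrite -(@sum_delta R m o t (fun j => lb j n)); apply: eq_big_nat => j hj.
  by rewrite /F GA //; lia.
rewrite -e1.
have split3 : forall j, (j < t)%N -> F j =
   \sum_(0 <= k < t) g m (o + k)%N * a (o + k)%N (o + j)%N
   + (if (0 < o)%N && (j == 0)%N then g m o.-1 * eps else 0)
   + (if (o + t < N)%N && (j == t.-1) then g m (o + t)%N * eps else 0).
  move=> j jt; rewrite /F (@big_cat_nat _ _ _ (o + t)%N) //=; try by lia.
  rewrite (@big_cat_nat _ _ _ o 0 (o + t)%N) //=; try by lia.
  have hB : \sum_(o <= i < o + t) g m i * a i (o + j)%N =
     \sum_(0 <= k < t) g m (o + k)%N * a (o + k)%N (o + j)%N.
    by rewrite -{1}(add0n o) big_addn addKn; apply: eq_big_nat => k _; rewrite addnC.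
  have hA : \sum_(0 <= i < o) g m i * a i (o + j)%N =
     (if (0 < o)%N && (j == 0)%N then g m o.-1 * eps else 0).
    case: (posnP o) => [->|o0] /=; first by rewrite big_geq.
    rewrite -{1}(prednK o0) big_nat_recr //= big1_seq ?add0r; last first.
      move=> k; rewrite mem_index_iota => /andP[_ hk]; rewrite a0 ?mulr0 //; lia.
    case: (eqVneq j 0%N) => [->|jn]; last by rewrite a0 ?mulr0 //; lia.
    have -> : (o + 0 = o.-1.+1)%N by lia.
    by rewrite aup //; lia.
  have hC : \sum_(o + t <= i < N) g m i * a i (o + j)%N =
     (if (o + t < N)%N && (j == t.-1) then g m (o + t)%N * eps else 0).
    case: ltnP => hN /=; last by rewrite big_geq.
    rewrite big_ltn // big1_seq ?addr0; last first.
      move=> k; rewrite mem_index_iota => /and3P[_ hk _]; rewrite a0 ?mulr0 //; lia.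
    case: (eqVneq j t.-1) => [->|jn].
      have -> : (o + t = (o + t.-1).+1)%N by lia.
      by rewrite adn //; lia.
    by rewrite a0 ?mulr0 //; lia.
  by rewrite hA hB hC; congr (_ + _); rewrite addrC.
rewrite (eq_big_nat _ _ (fun j hj => congr1 (fun x => x * lb j n) (split3 j _))); last by lia.
under eq_bigr do rewrite !mulrDl.
rewrite !big_split /=.
rewrite -!addrA; congr (_ + _).
  under eq_bigr do rewrite mulr_suml.
  rewrite exchange_big /=.
  under eq_bigr do under eq_bigr do rewrite -mulrA.
  under eq_bigr do rewrite -mulr_sumr.
  rewrite (eq_big_nat _ _ (fun k hk => congr1 (fun x => g m (o + k)%N * x) (LA k n _ nt))); last by lia.
  transitivity (\sum_(0 <= k < t) (n == 0 + k)%N%:R * g m (o + k)%N).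
    by rewrite sum_delta /= subn0 add0n nt.
  by apply: eq_big_nat => k _; rewrite mulrC add0n eq_sym.
congr (_ + _).
  rewrite big_ltn // big1_seq ?addr0; last first.
    move=> k; rewrite mem_index_iota => /and3P[_ hk _].
    by rewrite (_ : (k == 0)%N = false) ?andbF ?mul0r //; lia.
  by case: ifP => _; rewrite /= ?mul0r.
have -> : t = t.-1.+1 by lia.
rewrite big_nat_recr //= big1_seq ?add0r; last first.
  move=> k; rewrite mem_index_iota => /and3P[_ _ hk].
  by rewrite (_ : (k == t.-1)%N = false) ?andbF ?mul0r //; lia.
by rewrite eqxx andbT; case: ifP => _; rewrite ?mul0r.
Qed.
Lemma term_le_sum {R : realType} n (F : 'I_n -> R) i :
  (forall k, 0 <= F k) -> F i <= \sum_k F k.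
Proof.
move=> h; rewrite (bigD1 i) //= lerDl; apply: sumr_ge0 => k _; exact: h.
Qed.

Lemma l2norm_ge {R : realType} {n} (y : 'cV[R]_n) i : `|y i 0| <= l2norm y.
Proof.
rewrite /l2norm -sqrtr_sqr ler_sqrt; last by apply: sumr_ge0 => k _; rewrite sqr_ge0.
exact: (@term_le_sum R n (fun k => y k 0 ^+ 2) i (fun k => sqr_ge0 _)).
Qed.

Lemma l2norm_le {R : realType} {n} (y : 'cV[R]_n) : l2norm y <= \sum_i `|y i 0|.
Proof.
have T0 : 0 <= \sum_i `|y i 0| by apply: sumr_ge0.
rewrite /l2norm -(ger0_norm T0) -sqrtr_sqr ler_sqrt ?sqr_ge0 //.
rewrite expr2 mulr_suml; apply: ler_sum => i _.
rewrite -real_normK ?num_real // expr2 ler_wpM2l //.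
exact: (@term_le_sum R n (fun k => `|y k 0|) i (fun k => normr_ge0 _)).
Qed.

Lemma opnorm_entry {R : realType} N (X : 'M[R]_N) (i j : 'I_N) : `|X i j| <= opnorm X.
Proof.
set S := [set r | exists x : 'cV[R]_N, l2norm x <= 1 /\ r = l2norm (X *m x)]%classic.
have hs : has_sup S.
  split.
    exists (l2norm (X *m 0)); exists 0; split => //.
    rewrite /l2norm big1 ?sqrtr0 // => k _; rewrite mxE expr2 mulr0 //.
  exists (\sum_(a < N) \sum_(k < N) `|X a k|) => r [x [hx ->]].
  apply: (le_trans (l2norm_le (X *m x))); apply: ler_sum => a _.
  rewrite mxE; apply: le_trans; first exact: ler_norm_sum. apply: ler_sum => k _.
  rewrite normrM; apply: ler_piMr => //.
  exact: le_trans (l2norm_ge x k) hx.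
have he : S (l2norm (X *m (delta_mx j 0 : 'cV[R]_N))).
  exists (delta_mx j 0); split => //.
  rewrite /l2norm (bigD1 j) //= big1 ?addr0; last first.
    by move=> k hk; rewrite mxE (negbTE hk) /= expr2 mulr0.
  by rewrite mxE !eqxx expr2 mulr1 sqrtr1.
have hij : X i j = (X *m (delta_mx j 0 : 'cV[R]_N)) i 0.
  rewrite mxE (bigD1 j) //= !mxE !eqxx mulr1 big1 ?addr0 // => k hk.
  by rewrite !mxE (negbTE hk) /= mulr0.
have h1 := sup_upper_bound hs he.
rewrite hij; apply: le_trans (l2norm_ge _ i) _.
exact: h1.
Qed.

Lemma Hmat_tr {R : realType} (eps : R) V s n : (Hmat eps V s n)^T = Hmat eps V s n.
Proof.
apply/matrixP => i j; rewrite !mxE.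
case: (eqVneq i j) => [->|hij]; first by [].
by rewrite orbC.
Qed.

Lemma hf_shift {R : realType} (eps : R) V s o i j :
  hf eps V s (o + i)%N (o + j)%N = hf eps V (s + o%:Z) i j.
Proof.
rewrite /hf eqn_add2l -!addnS !eqn_add2l.
by case: ifP => // _; rewrite -addrA -PoszD.
Qed.

Lemma dist_le (i j : nat) : (i <= j)%N -> `|i%:Z - j%:Z|%N = (j - i)%N.
Proof. move=> h; lia. Qed.

Lemma dist_ge (i j : nat) : (j <= i)%N -> `|i%:Z - j%:Z|%N = (i - j)%N.
Proof. move=> h; lia. Qed.
Lemma unit_of_noneig {R : realType} n (H : 'M[R]_n) E :
  ~~ eigenvalue H E -> (H - E%:M) \in unitmx.
Proof. by rewrite -row_free_unit -kermx_eq0 /eigenvalue /eigenspace negbK. Qed.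

Lemma ext_HE {R : realType} (eps : R) V s n E i j : (i < n)%N -> (j < n)%N ->
  ext (Hmat eps V s n - E%:M) i j = hf eps V s i j - E * (i == j)%:R.
Proof. by move=> hi hj; rewrite ext_add ext_opp ext_H // ext_scal. Qed.

Lemma ext_inv_l {R : realType} n (A : 'M[R]_n) m j : A \in unitmx -> (m < n)%N -> (j < n)%N ->
  \sum_(0 <= k < n) ext (invmx A) m k * ext A k j = (m == j)%:R.
Proof.
move=> u hm hj; rewrite -ext_mul // mulVmx // ext_scal // mul1r //.
Qed.

Lemma ext_inv_r {R : realType} n (A : 'M[R]_n) m j : A \in unitmx -> (m < n)%N -> (j < n)%N ->
  \sum_(0 <= k < n) ext A m k * ext (invmx A) k j = (m == j)%:R.
Proof.
move=> u hm hj; rewrite -ext_mul // mulmxV // ext_scal // mul1r //.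
Qed.

Lemma resolv_H {R : realType} (eps : R) V s E (N o t : nat) m n :
  (Hmat eps V s N - E%:M) \in unitmx ->
  (Hmat eps V (s + o%:Z) t - E%:M) \in unitmx ->
  (m < N)%N -> (n < t)%N -> (o + t <= N)%N ->
  let g := ext (invmx (Hmat eps V s N - E%:M)) in
  let lb := ext (invmx (Hmat eps V (s + o%:Z) t - E%:M)) in
  g m (o + n)%N + (if (0 < o)%N then g m o.-1 * eps * lb 0%N n else 0)
    + (if (o + t < N)%N then g m (o + t)%N * eps * lb t.-1 n else 0)
  = if (o <= m)%N && (m < o + t)%N then lb (m - o)%N n else 0.
Proof.
move=> uN ut hm hn hot g lb.
have t0 : (0 < t)%N by lia.
pose a := ext (Hmat eps V s N - E%:M).
apply: (@resolv R N o t g a lb eps m n) => //.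
- move=> k j hkj.
  case: (ltnP k N) => hk; last by rewrite /a ext_outl.
  case: (ltnP j N) => hj; last by rewrite /a ext_outr.
  rewrite /a ext_HE // /hf.
  have -> : (k == j) = false by lia.
  have -> : (k.+1 == j) || (j.+1 == k) = false by lia.
  by rewrite mulr0 subr0.
- move=> k hk; rewrite /a ext_HE //; last by lia.
  rewrite /hf (_ : (k == k.+1) = false) ?mulr0 ?subr0 ?eqxx //; lia.
- move=> k hk; rewrite /a ext_HE //; last by lia.
  rewrite /hf (_ : (k.+1 == k) = false) ?mulr0 ?subr0 ?eqxx ?orbT //; lia.
- by move=> j hj; rewrite /g /a ext_inv_l.
- move=> k n' hk hn'.
  rewrite -(@ext_inv_r R t _ k n' ut hk hn'); apply: eq_big_nat => j hj.
  rewrite /a /lb ext_HE; try lia.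
  by rewrite ext_HE ?hf_shift ?eqn_add2l //; lia.
Qed.

Lemma ext_Bd {R : realType} (eps : R) V s (p q r : nat) k j :
  (k < p + q + r)%N -> (j < p + q + r)%N ->
  ext (block_mx (block_mx (Hmat eps V s p) 0 0 (Hmat eps V (s + p%:Z) q)) 0 0
         (Hmat eps V (s + p%:Z + q%:Z) r)) k j =
  if [|| (k < p)%N && (j < p)%N, [&& (p <= k)%N, (k < p + q)%N, (p <= j)%N & (j < p + q)%N]
      | (p + q <= k)%N && (p + q <= j)%N] then hf eps V s k j else 0.
Proof.
move=> hk hj; rewrite ext_block //.
case: ifP => [/andP[h1 h2] | h1].
  rewrite ext_block //.
  case: ifP => [/andP[h3 h4] | h3].
    by rewrite ext_H // (_ : [|| _, _ | _] = true) //; lia.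
  case: ifP => [/andP[h5 h6] | h5].
    rewrite ext_H; try lia.
    rewrite -hf_shift !subnKC // (_ : [|| _, _ | _] = true) //; lia.
  by rewrite (_ : [|| _, _ | _] = false) //; lia.
case: ifP => [/andP[h5 h6] | h5].
  rewrite ext_H; try lia.
  rewrite -addrA -PoszD -hf_shift !subnKC // (_ : [|| _, _ | _] = true) //; lia.
by rewrite (_ : [|| _, _ | _] = false) //; lia.
Qed.

Lemma Pbound {R : realType} (eps : R) V s E (p q r l : nat) (K : R) i :
  0 < eps -> (0 < p)%N -> (0 < q)%N -> (0 < r)%N ->
  let Hhat := Hmat eps V s (p + q + r) in
  let Gamma : 'M[R]_(p + q + r) := Hhat - block_mx (block_mx (Hmat eps V s p) 0 0
       (Hmat eps V (s + p%:Z) q)) 0 0 (Hmat eps V (s + p%:Z + q%:Z) r) in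
  let P : 'M[R]_(p + q + r) :=
    \matrix_(i, j) ((i == j) && (p <= i + l)%N && (i < p + q + l)%N)%:R in
  opnorm (P *m invmx (Hhat - E%:M) *m Gamma) <= K ->
  (i < p + q + r)%N -> (p <= i + l)%N -> (i < p + q + l)%N ->
  let g := ext (invmx (Hhat - E%:M)) in
  `|g i p| * eps <= K /\ `|g i (p + q).-1| * eps <= K.
Proof.
move=> e0 p0 q0 r0 Hhat Gamma P hP hi hil hiq g.
set N := (p + q + r)%N.
set Y := P *m invmx (Hhat - E%:M) *m Gamma.
have hY : forall j, (j < N)%N -> `|ext Y i j| <= K.
  move=> j hj; rewrite (@ext_ord R _ _ _ _ hi hj); exact: le_trans (opnorm_entry _ _ _ _) hP.
have hPG : forall k, (k < N)%N -> ext (P *m invmx (Hhat - E%:M)) i k = g i k.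
  move=> k hk; rewrite ext_mul //.
  transitivity (\sum_(0 <= k2 < N) (i == 0 + k2)%N%:R * g k2 k).
    apply: eq_big_nat => k2 hk2; rewrite (@ext_ord R _ _ _ _ hi (_ : (k2 < N)%N)) ?mxE /=.
    by rewrite hil hiq !andbT add0n.
  by rewrite sum_delta /= subn0 hi.
have hYj : forall j c, (j < N)%N -> (forall k, (k < N)%N -> ext Gamma k j = (c == k)%:R * eps) ->
    (c < N)%N -> ext Y i j = g i c * eps.
  move=> j c hj hG hc; rewrite ext_mul //.
  transitivity (\sum_(0 <= k < N) (c == 0 + k)%N%:R * (g i k * eps)).
    apply: eq_big_nat => k hk; rewrite hPG ?hG; try lia.
    by rewrite mulrCA mulrA.
  by rewrite sum_delta /= subn0 hc.
have hGam : forall k j, (k < N)%N -> (j < N)%N -> ext Gamma k j =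
   if [|| (k < p)%N && (j < p)%N, [&& (p <= k)%N, (k < p + q)%N, (p <= j)%N & (j < p + q)%N]
      | (p + q <= k)%N && (p + q <= j)%N] then 0 else hf eps V s k j.
  move=> k j hk hj; rewrite /Gamma ext_add ext_opp ext_Bd // /Hhat ext_H //.
  by case: ifP => _; rewrite ?subrr ?subr0.
split.
- have := hY p.-1 (ltac:(lia)).
  rewrite (hYj p.-1 p) //; try lia; last first.
    move=> k hk; rewrite hGam //; try lia.
    case: ifP => hc.
      rewrite (_ : (p == k) = false) ?mul0r //; move: hc; lia.
    rewrite /hf (_ : (k == p.-1) = false); last by move: hc; lia.
    case: (eqVneq p k) => [<-|hpk].
      by rewrite (_ : (p.-1.+1 == p) = true) ?orbT ?mul1r //; lia.
    rewrite (_ : (k.+1 == p.-1) || (p.-1.+1 == k) = false) ?mul0r //.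
    move: hc hpk; lia.
  by rewrite normrM (gtr0_norm e0).
- have hq1 : (p + q < N)%N by rewrite /N; lia.
  have := hY (p + q)%N hq1.
  rewrite (hYj (p + q)%N (p + q).-1) //; try lia; last first.
    move=> k hk; rewrite hGam //; try lia.
    case: ifP => hc.
      rewrite (_ : ((p + q).-1 == k) = false) ?mul0r //; move: hc; lia.
    rewrite /hf (_ : (k == (p + q)%N) = false); last by move: hc; lia.
    case: (eqVneq (p + q).-1 k) => [<-|hpk].
      by rewrite (_ : ((p + q).-1.+1 == (p + q)%N) = true) ?mul1r //; lia.
    rewrite (_ : (k.+1 == (p + q)%N) || ((p + q).+1 == k) = false) ?mul0r //.
    move: hc hpk; lia.
  by rewrite normrM (gtr0_norm e0).
Qed.

Lemma bnd2 {R : realType} (a b c e K Ea Ec : R) : 0 < e -> `|a| <= Ea -> `|b| * e <= K ->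
  `|c| <= Ec -> `|a - b * e * c| <= Ea + K * Ec.
Proof.
move=> e0 ha hb hc; apply: le_trans (ler_normB _ _) _; apply: lerD => //.
by rewrite !normrM (gtr0_norm e0) ler_pM // mulr_ge0 // ltW.
Qed.

Lemma bnd1 {R : realType} (b c e K Ec : R) : 0 < e -> `|b| * e <= K ->
  `|c| <= Ec -> `|b * e * c| <= K * Ec.
Proof.
move=> e0 hb hc; by rewrite !normrM (gtr0_norm e0) ler_pM // mulr_ge0 // ltW.
Qed.
Ltac nlia := repeat match goal with
  | x := _ : nat |- _ => subst x
  | H : context [Order.le] |- _ => clear H
  | H : context [Order.lt] |- _ => clear H
  | H : context [unitmx] |- _ => clear H
  | H : context [eigenvalue] |- _ => clear H
  | H : context [opnorm] |- _ => clear H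
  end; lia.

Theorem lemmaA2 (R : realType) (v : R -> R) (alpha theta E eps rho gamma : R)
  (l lhat : nat) (s : int) (p q r : nat) :
  (exists C : R, forall x, `|v x| <= C) ->
  0 < eps -> eps < 1 / 7 ->
  0 < rho -> rho < 1 / 2 ->
  1 < gamma -> gamma <= `|ln eps| ->
  let M := Num.max (l%:R) `|ln rho| in
  16 * `|ln eps| * M < lhat%:R ->
  let gcheck := gamma - 6 * `|ln eps| * M / lhat%:R in
  (0 < p)%N -> (0 < q)%N -> (0 < r)%N ->
  let V := qp_pot v alpha theta in
  let Hhat := Hmat eps V s (p + q + r) in
  let Hl := Hmat eps V s p in
  let Hm := Hmat eps V (s + p%:Z) q in
  let Hr := Hmat eps V (s + p%:Z + q%:Z) r in
  let Gamma : 'M[R]_(p + q + r) := Hhat - block_mx (block_mx Hl 0 0 Hm) 0 0 Hr in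
  let P : 'M[R]_(p + q + r) :=
    \matrix_(i, j) ((i == j) && (p <= i + l)%N && (i < p + q + l)%N)%:R in
  (* (1) *)
  GF_decay eps V s p E l gamma ->
  GF_decay eps V (s + p%:Z + q%:Z) r E l gamma ->
  (* (2) *)
  ~~ eigenvalue Hhat E ->
  opnorm (P *m invmx (Hhat - E%:M) *m Gamma) <= 2 / rho ->
  (* (3) *)
  q%:R <= M ->
  GF_decay eps V s (p + q + r) E lhat gcheck.
Proof.
move=> _ e0 e7 r0 r2 g1 gL M hl gc p0 q0 r0' V Hhat Hl Hm Hr Gamma P [nevl dl] [nevr dr] nev hP hq.
split => //.
set N := (p + q + r)%N.
have uN : (Hmat eps V s N - E%:M) \in unitmx by exact: unit_of_noneig.
have ul : (Hl - E%:M) \in unitmx by exact: unit_of_noneig.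
have ur : (Hr - E%:M) \in unitmx by exact: unit_of_noneig.
set g := ext (invmx (Hhat - E%:M)).
set gl := ext (invmx (Hl - E%:M)).
set gr := ext (invmx (Hr - E%:M)).
set K := 2 / rho.
have gs : forall i j, g i j = g j i.
  move=> i j; rewrite /g -ext_tr trmx_inv.
  have -> : (Hhat - E%:M)^T = Hhat - E%:M by rewrite linearB /= Hmat_tr tr_scalar_mx.
  by [].
have I1 : forall m n, (m < N)%N -> (n < p)%N ->
    g m n + g m p * eps * gl p.-1 n = (if (m < p)%N then gl m n else 0).
  move=> m n hm hn.
  have ul0 : (Hmat eps V (s + 0%:Z) p - E%:M) \in unitmx by rewrite addr0.
  have := @resolv_H R eps V s E N 0 p m n uN ul0 hm hn (ltac:(nlia)).
  rewrite /= !add0n subn0 (_ : (p < N)%N = true); last by nlia.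
  rewrite !addr0 => ->. by [].
have I3 : forall m n, (m < N)%N -> (n < r)%N ->
    g m (p + q + n)%N + g m (p + q).-1 * eps * gr 0%N n =
    (if (p + q <= m)%N then gr (m - (p + q))%N n else 0).
  move=> m n hm hn.
  have ur0 : (Hmat eps V (s + (p + q)%N%:Z) r - E%:M) \in unitmx by rewrite PoszD addrA.
  have := @resolv_H R eps V s E N (p + q) r m n uN ur0 hm hn (ltac:(nlia)).
  rewrite /= (_ : (0 < p + q)%N = true); last by nlia.
  rewrite (_ : (p + q + r < N)%N = false); last by nlia.
  rewrite (_ : (m < p + q + r)%N = true); last by nlia.
  rewrite andbT addr0 PoszD addrA => ->. by [].
have DL : forall i j, (i < p)%N -> (j < p)%N -> (l <= `|i%:Z - j%:Z|%N)%N ->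
    `|gl i j| <= expR (- (gamma * (`|i%:Z - j%:Z|%N)%:R)).
  move=> i j hi hj hd; rewrite /gl (@ext_ord R _ _ _ _ hi hj).
  exact: (dl (Ordinal hi) (Ordinal hj) hd).
have DR : forall i j, (i < r)%N -> (j < r)%N -> (l <= `|i%:Z - j%:Z|%N)%N ->
    `|gr i j| <= expR (- (gamma * (`|i%:Z - j%:Z|%N)%:R)).
  move=> i j hi hj hd; rewrite /gr (@ext_ord R _ _ _ _ hi hj).
  exact: (dr (Ordinal hi) (Ordinal hj) hd).
have g0 : 0 < gamma by apply: lt_trans g1.
have eB : forall x : nat, expR (- (gamma * x%:R)) <= 1.
  by move=> x; rewrite -[X in _ <= X]expR0 ler_expR oppr_le0 mulr_ge0 // ltW.
have emono : forall x y : nat, (x <= y)%N ->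
    expR (- (gamma * y%:R)) <= expR (- (gamma * x%:R)).
  by move=> x y hxy; rewrite ler_expR lerN2 ler_pM2l // ler_nat.
have e1 : eps <= 1 by clear -e7 e0; lra.
have K0 : 0 <= K by rewrite /K divr_ge0 // ltW.
have PB : forall i, (i < N)%N -> (p <= i + l)%N -> (i < p + q + l)%N ->
    `|g i p| * eps <= K /\ `|g i (p + q).-1| * eps <= K.
  move=> i hi hil hiq; exact: (@Pbound R eps V s E p q r l K i e0 p0 q0 r0' hP hi hil hiq).
have QB1 : forall i, (i < p + q)%N -> `|g i p| * eps <= K.
  move=> i hi; case: (leqP p (i + l)) => hil.
    by case: (PB i (ltac:(nlia)) hil (ltac:(nlia))).
  have h := I1 p i (ltac:(nlia)) (ltac:(nlia)); rewrite ltnn in h.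
  have e : g p i = - (g p p * eps * gl p.-1 i) by apply/eqP; rewrite -addr_eq0 h.
  rewrite gs e normrN.
  have hpp := (PB p (ltac:(nlia)) (ltac:(nlia)) (ltac:(nlia))).1.
  have hd : `|(p.-1)%:Z - i%:Z|%N = (p.-1 - i)%N by apply: dist_ge; nlia.
  have hgl : `|gl p.-1 i| <= 1.
    apply: le_trans (DL _ _ _ _ _) (eB _); rewrite ?hd; nlia.
  rewrite !normrM (gtr0_norm e0).
  suff : `|g p p| * eps * (`|gl p.-1 i| * eps) <= K * 1 by rewrite mulr1 !mulrA.
  apply: ler_pM => //; rewrite ?mulr_ge0 // ?(ltW e0) //; exact: mulr_ile1 (normr_ge0 _) (ltW e0) hgl e1.
have QB2 : forall i, (p <= i)%N -> (i < N)%N -> `|g i (p + q).-1| * eps <= K.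
  move=> i hpi hi; case: (ltnP i (p + q + l)) => hiq.
    by case: (PB i hi (ltac:(nlia)) hiq).
  have h := I3 (p + q).-1 (i - (p + q))%N (ltac:(nlia)) (ltac:(nlia)).
  rewrite (_ : (p + q <= (p + q).-1)%N = false) in h; last by nlia.
  rewrite subnKC in h; last by nlia.
  have e : g (p + q).-1 i = - (g (p + q).-1 (p + q).-1 * eps * gr 0%N (i - (p + q))%N).
    by apply/eqP; rewrite -addr_eq0 h.
  rewrite gs e normrN.
  have hpp := (PB (p + q).-1 (ltac:(nlia)) (ltac:(nlia)) (ltac:(nlia))).2.
  have hd : `|(0%N)%:Z - (i - (p + q))%N%:Z|%N = (i - (p + q))%N by nlia.
  have hgr : `|gr 0%N (i - (p + q))%N| <= 1.
    apply: le_trans (DR _ _ _ _ _) (eB _); rewrite ?hd; nlia.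
  rewrite !normrM (gtr0_norm e0).
  suff : `|g (p + q).-1 (p + q).-1| * eps * (`|gr 0%N (i - (p + q))%N| * eps) <= K * 1
    by rewrite mulr1 !mulrA.
  apply: ler_pM => //; rewrite ?mulr_ge0 // ?(ltW e0) //; exact: mulr_ile1 (normr_ge0 _) (ltW e0) hgr e1.
set L := `|ln eps|.
have lne : ln eps < 0 by rewrite ln_lt0 // e0 /=; clear -e7; lra.
have hL : 3 / 4 <= L.
  have h1 : ln eps <= eps - 1.
    have := @le_ln1Dx R (eps - 1) (ltac:(clear -e0; lra)).
    by rewrite addrC subrK.
  rewrite /L (ler0_norm (ltW lne)); clear -h1 e7; lra.
have hM0 : 0 <= M by rewrite /M le_max normr_ge0 orbT.
have hlM : l%:R <= M by rewrite /M le_max lexx.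
have hrM : `|ln rho| <= M by rewrite /M le_max lexx orbT.
have hbig : forall d, (lhat <= d)%N -> (2 * l + q < d)%N.
  move=> d hd; rewrite -(ltr_nat R) natrD natrM.
  have h1 : lhat%:R <= d%:R :> R by rewrite ler_nat.
  have h2 : 3 * M <= 16 * L * M by nra.
  move: h2 hl; set LM := 16 * L * M => h2 hl.
  clear -h1 h2 hl hlM hq; lra.
have heg : eps <= expR (- gamma).
  rewrite -[X in X <= _]lnK ?posrE // ler_expR.
  move: gL; rewrite -/L /L (ler0_norm (ltW lne)); clear; lra.
set Bnd := (1 + K) * expR (gamma * (2 * M)).
have claim : forall m n, (m < n)%N -> (n < N)%N -> (lhat <= n - m)%N ->
    `|g m n| <= Bnd * expR (- (gamma * (n - m)%N%:R)).
  move=> m n hmn hn hd.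
  have hb := hbig _ hd.
  have fin : forall c x, (n - m <= x + q + l)%N -> 0 <= c -> c <= 1 + K ->
      `|g m n| <= c * expR (- (gamma * x%:R)) ->
      `|g m n| <= Bnd * expR (- (gamma * (n - m)%N%:R)).
    move=> c x hx c0 cK h; apply: le_trans h _.
    rewrite /Bnd -mulrA; apply: ler_pM => //; first exact: expR_ge0.
    rewrite -expRD ler_expR.
    have h1 : (n - m)%N%:R <= x%:R + 2 * M.
      have : (n - m)%N%:R <= (x + q + l)%N%:R :> R by rewrite ler_nat.
      rewrite !natrD; clear -hq hlM; lra.
    clear -h1 g0; nra.
  have K1 : K <= 1 + K by rewrite lerDr.
  have K10 : 0 <= 1 + K by rewrite addr_ge0.
  case: (ltnP n p) => hnp.
    have h := I1 n m (ltac:(nlia)) (ltac:(nlia)); rewrite hnp in h.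
    have e : g m n = gl n m - g n p * eps * gl p.-1 m by rewrite gs -h; ring.
    apply: (fin (1 + K) (n - m)%N) => //; first by nlia.
    rewrite e mulrDl mul1r; apply: bnd2 => //.
    - apply: le_trans (DL n m _ _ _) (emono _ _ _); nlia.
    - apply: QB1; nlia.
    - apply: le_trans (DL p.-1 m _ _ _) (emono _ _ _); nlia.
  case: (leqP (p + q) m) => hmpq.
    have h := I3 m (n - (p + q))%N (ltac:(nlia)) (ltac:(nlia)).
    rewrite hmpq subnKC in h; last by nlia.
    have e : g m n = gr (m - (p + q))%N (n - (p + q))%N
                     - g m (p + q).-1 * eps * gr 0%N (n - (p + q))%N by rewrite -h; ring.
    apply: (fin (1 + K) (n - m)%N) => //; first by nlia.
    rewrite e mulrDl mul1r; apply: bnd2 => //.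
    - apply: le_trans (DR _ _ _ _ _) (emono _ _ _); nlia.
    - apply: QB2; nlia.
    - apply: le_trans (DR _ _ _ _ _) (emono _ _ _); nlia.
  case: (ltnP m p) => hmp; last first.
    have hnq : (p + q <= n)%N by nlia.
    have h := I3 m (n - (p + q))%N (ltac:(nlia)) (ltac:(nlia)).
    rewrite (_ : (p + q <= m)%N = false) in h; last by nlia.
    rewrite subnKC in h; last by nlia.
    have e : g m n = - (g m (p + q).-1 * eps * gr 0%N (n - (p + q))%N).
      by apply/eqP; rewrite -addr_eq0 h.
    apply: (fin K (n - (p + q))%N) => //; first by nlia.
    rewrite e normrN; apply: bnd1 => //; first by apply: QB2; nlia.
    apply: le_trans (DR _ _ _ _ _) (emono _ _ _); nlia.
  case: (ltnP n (p + q)) => hnq.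
    have h := I1 n m (ltac:(nlia)) (ltac:(nlia)).
    rewrite (_ : (n < p)%N = false) in h; last by nlia.
    have e : g m n = - (g n p * eps * gl p.-1 m).
      by rewrite gs; apply/eqP; rewrite -addr_eq0 h.
    apply: (fin K (p.-1 - m)%N) => //; first by nlia.
    rewrite e normrN; apply: bnd1 => //; first by apply: QB1; nlia.
    apply: le_trans (DL _ _ _ _ _) (emono _ _ _); nlia.
  case: (leqP p (m + l)) => hml.
    have h := I3 m (n - (p + q))%N (ltac:(nlia)) (ltac:(nlia)).
    rewrite (_ : (p + q <= m)%N = false) in h; last by nlia.
    rewrite subnKC in h; last by nlia.
    have e : g m n = - (g m (p + q).-1 * eps * gr 0%N (n - (p + q))%N).
      by apply/eqP; rewrite -addr_eq0 h.
    apply: (fin K (n - (p + q))%N) => //; first by nlia.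
    rewrite e normrN; apply: bnd1 => //.
      by case: (PB m (ltac:(nlia)) hml (ltac:(nlia))).
    apply: le_trans (DR _ _ _ _ _) (emono _ _ _); nlia.
  case: (ltnP n (p + q + l)) => hnl.
    have h := I1 n m (ltac:(nlia)) (ltac:(nlia)).
    rewrite (_ : (n < p)%N = false) in h; last by nlia.
    have e : g m n = - (g n p * eps * gl p.-1 m).
      by rewrite gs; apply/eqP; rewrite -addr_eq0 h.
    apply: (fin K (p.-1 - m)%N) => //; first by nlia.
    rewrite e normrN; apply: bnd1 => //.
      by case: (PB n hn (ltac:(nlia)) hnl).
    apply: le_trans (DL _ _ _ _ _) (emono _ _ _); nlia.
  have h := I1 n m (ltac:(nlia)) (ltac:(nlia)).
  rewrite (_ : (n < p)%N = false) in h; last by nlia.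
  have e : g m n = - (g n p * eps * gl p.-1 m).
    by rewrite gs; apply/eqP; rewrite -addr_eq0 h.
  have h2 := I3 p (n - (p + q))%N (ltac:(nlia)) (ltac:(nlia)).
  rewrite (_ : (p + q <= p)%N = false) in h2; last by nlia.
  rewrite subnKC in h2; last by nlia.
  have e2 : g p n = - (g p (p + q).-1 * eps * gr 0%N (n - (p + q))%N).
    by apply/eqP; rewrite -addr_eq0 h2.
  set A := (n - (p + q))%N. set Bn := (p.-1 - m)%N.
  apply: (fin K (A + 1 + Bn)%N) => //; first by rewrite /A /Bn; nlia.
  have ee : expR (- (gamma * (A + 1 + Bn)%N%:R)) =
      expR (- (gamma * A%:R)) * (expR (- gamma) * expR (- (gamma * Bn%:R))).
    by rewrite -!expRD !natrD; congr expR; ring.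
  rewrite ee e normrN !normrM (gtr0_norm e0) gs e2 normrN !normrM (gtr0_norm e0).
  have hpp : `|g p (p + q).-1| * eps <= K by case: (PB p (ltac:(nlia)) (ltac:(nlia)) (ltac:(nlia))).
  have hgr : `|gr 0%N A| <= expR (- (gamma * A%:R)).
    apply: le_trans (DR _ _ _ _ _) (emono _ _ _); rewrite /A; nlia.
  have hgl : `|gl p.-1 m| <= expR (- (gamma * Bn%:R)).
    apply: le_trans (DL _ _ _ _ _) (emono _ _ _); rewrite /Bn; nlia.
  suff : (`|g p (p + q).-1| * eps) * (`|gr 0%N A| * (eps * `|gl p.-1 m|)) <=
         K * (expR (- (gamma * A%:R)) * (expR (- gamma) * expR (- (gamma * Bn%:R))))
    by rewrite !mulrA.
  apply: ler_pM; rewrite ?mulr_ge0 // ?(ltW e0) //.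
  apply: ler_pM; rewrite ?mulr_ge0 // ?(ltW e0) //.
  by apply: ler_pM; rewrite ?(ltW e0).
move=> i j hij.
have lh0 : (0 < lhat)%N.
  rewrite -(ltr0n R); apply: le_lt_trans hl.
  by rewrite !mulr_ge0 // ?normr_ge0.
have key : `|g i j| <= Bnd * expR (- (gamma * (odist i j)%:R)).
  case: (ltngtP i j) => hij'.
  - have e : odist i j = (j - i)%N by apply: dist_le; exact: ltnW.
    rewrite e in hij *; exact: claim hij' (ltn_ord j) hij.
  - have e : odist i j = (i - j)%N by apply: dist_ge; exact: ltnW.
    rewrite gs e in hij *; exact: claim hij' (ltn_ord i) hij.
  - have e : odist i j = 0%N by rewrite /odist hij' subrr.
    by move: lh0; rewrite e leqn0 in hij; rewrite (eqP hij).
rewrite -extE; apply: le_trans key _.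
set dR := (odist i j)%:R.
pose lhR : R := lhat%:R.
have lhR0 : 0 < lhR by rewrite /lhR ltr0n.
have t1 : 1 <= dR / lhR by rewrite ler_pdivlMr // mul1r /dR /lhR ler_nat.
have -> : - (gc * dR) = 6 * L * M * (dR / lhR) + - (gamma * dR) by rewrite /gc /L /lhR; ring.
rewrite expRD ler_wpM2r ?expR_ge0 //.
set u := rho^-1.
have u1 : rho * u = 1 by rewrite /u mulfV // gt_eqF.
have u2 : 2 < u by clear -u1 r0 r2; nra.
have Ku : 1 + K = 1 + 2 * u by [].
have hu3 : 1 + 2 * u <= u * (u * u) by clear -u2; nra.
have lnr : ln rho < 0 by rewrite ln_lt0 // r0 /=; clear -r2; lra.
have ue : u = expR `|ln rho| by rewrite ler0_norm ?(ltW lnr) // expRN lnK ?posrE.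
have uM : u <= expR M by rewrite ue ler_expR.
have u0 : 0 <= u by clear -u2; lra.
have e3 : 1 + K <= expR (3 * M).
  have -> : expR (3 * M) = expR M * (expR M * expR M) by rewrite -!expRD; congr expR; ring.
  rewrite Ku; apply: le_trans hu3 _.
  by apply: ler_pM => //; [rewrite mulr_ge0 | apply: ler_pM].
rewrite /Bnd; apply: le_trans (_ : expR (3 * M) * expR (gamma * (2 * M)) <= _).
  by rewrite ler_wpM2r ?expR_ge0.
rewrite -expRD ler_expR.
set t := dR / lhR.
have p1 : 0 <= (L - gamma) * M by rewrite mulr_ge0 // subr_ge0.
have p2 : 0 <= (L - 3 / 4) * M by rewrite mulr_ge0 // subr_ge0.
have p3 : 0 <= L * M * (t - 1) by rewrite !mulr_ge0 // ?subr_ge0 // /L normr_ge0.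
clear -p1 p2 p3; nra.
Qed.
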